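(* Let $Q$ be a CAT(0) planar graph. Any combinatorial geodesic is a path of shortest directed distance between its endpoints: if $\gamma$ is a path from $u$ to $v$ with the minimal number $\ell(u,v)$ of edges, then the directed length of $\gamma$ equals $\delta(u,v)$.
   Context: A CAT(0) planar graph is a nonempty connected finite directed plane graph whose interior faces are triangles with edges forming directed 3-cycles, whose interior vertices have degree at least 6, and in which every edge and vertex lies on the perimeter of some face. Directed length of a path: each edge traversed along its orientation costs 1, against it costs 2; $\delta(u,v)$ is the minimal directed length of a walk from $u$ to $v$. The combinatorial distance $\ell(u,v)$ is the minimal number of edges of a path ignoring orientations; a path achieving it is a combinatorial geodesic. *)

(* Defs.v *)
(* Plane graphs are represented combinatorially by a
   combinatorial map (rotation system): darts, a fixed-point-free involution
   [alpha] (the two darts of an edge), a vertex rotation [sigma] whose orbits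
   are the darts around a vertex, and faces = orbits of [sigma \o alpha].
   Planarity = Euler's formula V - E + F = 2 (for connected maps).  *)
From mathcomp Require Import all_boot.


Record plane_digraph := PlaneDigraph {
  pV : finType;
  pD : finType;
  ptail : pD -> pV;
  palpha : pD -> pD;
  psigma : pD -> pD;
  porient : pD -> bool;       (* true iff the edge is oriented tail -> head along this dart *)
  pouter : pD                 (* a dart on the boundary walk of the outer face *)
}.

Section Defs.
Variable G : plane_digraph.
Local Notation V := (pV G).
Local Notation D := (pD G).
Local Notation tail := (@ptail G).
Local Notation alpha := (@palpha G).
Local Notation sigma := (@psigma G).

Definition phead (d : D) : V := tail (alpha d).
Definition pphi (d : D) : D := sigma (alpha d).

Definition adj : rel V := fun u v => [exists d : D, (tail d == u) && (phead d == v)].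

Definition outer_dart (d : D) : bool := fconnect pphi (@pouter G) d.
Definition interior_dart (d : D) : bool := ~~ outer_dart d.

Definition num_faces : nat := #|[pred d : D | froot pphi d == d]|.
Definition num_edges : nat := #|D| %/ 2.
Definition degree (v : V) : nat := #|[pred d : D | tail d == v]|.
Definition interior_vertex (v : V) : bool := [forall d : D, outer_dart d ==> (tail d != v)].

Definition is_plane_map : Prop :=
  (forall d, alpha (alpha d) = d) /\ (forall d, alpha d != d) /\
  injective sigma /\
  (forall d, tail (sigma d) = tail d) /\
  (forall d d', tail d = tail d' -> fconnect sigma d d') /\
  (forall d, @porient G (alpha d) = ~~ @porient G d).

Definition is_simple : Prop :=
  (forall d, tail d != phead d) /\
  (forall d d', tail d = tail d' -> phead d = phead d' -> d = d').

Definition is_connected : Prop := forall u v : V, connect adj u v.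

Definition euler_planar : Prop := (#|V| + num_faces = num_edges + 2)%N.

Definition is_CAT0_planar : Prop :=
  is_plane_map /\ is_simple /\ is_connected /\ euler_planar /\
  (* interior faces are triangles whose edges form a directed 3-cycle *)
  (forall d, interior_dart d ->
     order pphi d = 3 /\ @porient G (pphi d) = @porient G d) /\
  (forall v, interior_vertex v -> 6 <= degree v) /\
  (forall d, interior_dart d || interior_dart (alpha d)) /\
  (forall v, exists d, (tail d == v) && interior_dart d).

Fixpoint is_walk (u v : V) (p : seq D) : bool :=
  if p is d :: p' then (tail d == u) && is_walk (phead d) v p' else u == v.

Definition dlength (p : seq D) : nat :=
  sumn [seq (if @porient G d then 1 else 2) | d <- p].

Definition is_delta (u v : V) (k : nat) : Prop :=
  (exists q, is_walk u v q /\ dlength q = k) /\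
  (forall q, is_walk u v q -> k <= dlength q).

Definition comb_geodesic (u v : V) (p : seq D) : Prop :=
  is_walk u v p /\ forall q, is_walk u v q -> size p <= size q.

End Defs.

(* Main.v *)
Require Import Defs.
From mathcomp Require Import all_boot.
From mathcomp Require Import zify.
Set Implicit Arguments. Unset Strict Implicit. Unset Printing Implicit Defensive.

Section Basics.
Variable G : plane_digraph.
Local Notation V := (pV G).
Local Notation D := (pD G).
Local Notation tail := (ptail G).
Local Notation alpha := (palpha G).
Local Notation sigma := (psigma G).
Local Notation orient := (porient G).
Local Notation head := (phead G).
Local Notation phi := (pphi G).

Definition cost (d : D) : nat := if orient d then 1 else 2.

Lemma dlength_cons d p : dlength G (d :: p) = cost d + dlength G p.
Proof. by []. Qed.

Lemma dlength_nil : dlength G [::] = 0. Proof. by []. Qed.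

Lemma dlength_cat p q : dlength G (p ++ q) = dlength G p + dlength G q.
Proof. by rewrite /dlength map_cat sumn_cat. Qed.

Lemma cost_ge1 d : 1 <= cost d. Proof. by rewrite /cost; case: (orient d). Qed.
Lemma cost_le2 d : cost d <= 2. Proof. by rewrite /cost; case: (orient d). Qed.

Lemma dlength_ge p : size p <= dlength G p.
Proof. elim: p => //= d p IH; rewrite dlength_cons; have := cost_ge1 d; lia. Qed.

Lemma dlength_le p : dlength G p <= 2 * size p.
Proof. elim: p => //= d p IH; rewrite dlength_cons; have := cost_le2 d; lia. Qed.

Lemma is_walk_cat u m v p q :
  is_walk G u m p -> is_walk G m v q -> is_walk G u v (p ++ q).
Proof.
elim: p u => [|d p IH] u /=; first by move/eqP->.
by case/andP=> -> /IH H /H.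
Qed.

Lemma is_walk_catP u v p q :
  is_walk G u v (p ++ q) -> exists m, is_walk G u m p /\ is_walk G m v q.
Proof.
elim: p u => [|d p IH] u /=; first by move=> H; exists u; rewrite eqxx.
case/andP=> /eqP <- /IH [m [H1 H2]]; exists m; by rewrite eqxx H1.
Qed.

Lemma is_walk_eq u v p : is_walk G u v p -> forall u' v', u' = u -> v' = v -> is_walk G u' v' p.
Proof. by move=> H u' v' -> ->. Qed.

End Basics.

Record good (G : plane_digraph) : Prop := Good {
  g_aa : forall d, palpha G (palpha G d) = d;
  g_sinj : injective (psigma G);
  g_stail : forall d, ptail G (psigma G d) = ptail G d;
  g_sconn : forall d d', ptail G d = ptail G d' -> fconnect (psigma G) d d';
  g_or : forall d, porient G (palpha G d) = ~~ porient G d;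
  g_noloop : forall d, ptail G d != phead G d;
  g_simple : forall d d', ptail G d = ptail G d' -> phead G d = phead G d' -> d = d';
  g_conn : forall u v : pV G, exists q, is_walk G u v q;
  g_eu : 6 * #|pV G| = 6 + #|pD G| + 2 * #|[pred d | outer_dart G d]|;
  g_tri : forall d, interior_dart G d ->
     order (pphi G) d = 3 /\ porient G (pphi G d) = porient G d;
  g_deg : forall v : pV G, interior_vertex G v -> 6 <= degree G v
}.

Section Good.
Variable G : plane_digraph.
Hypothesis gG : good G.
Local Notation V := (pV G).
Local Notation D := (pD G).
Local Notation tail := (ptail G).
Local Notation alpha := (palpha G).
Local Notation sigma := (psigma G).
Local Notation orient := (porient G).
Local Notation head := (phead G).
Local Notation phi := (pphi G).

Lemma alpha_inj : injective alpha.
Proof. exact: (can_inj (g_aa gG)). Qed.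

Lemma phi_inj : injective phi.
Proof. by move=> x y /(g_sinj gG) /alpha_inj. Qed.

Lemma head_alpha d : head (alpha d) = tail d.
Proof. by rewrite /phead (g_aa gG). Qed.

Lemma tail_alpha d : tail (alpha d) = head d.
Proof. by []. Qed.

Lemma tail_phi d : tail (phi d) = head d.
Proof. by rewrite /pphi (g_stail gG). Qed.

Lemma cost_alpha d : cost (alpha d) + cost d = 3.
Proof. by rewrite /cost (g_or gG); case: (orient d). Qed.

Definition rwalk (p : seq D) := rev (map alpha p).

Lemma rwalk_walk u v p : is_walk G u v p -> is_walk G v u (rwalk p).
Proof.
elim: p u => [|d p IH] u /=; first by move/eqP->; rewrite /rwalk /= eqxx.
case/andP=> /eqP <- /IH H.
rewrite /rwalk /= rev_cons -cats1; apply: is_walk_cat H _.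
by rewrite /= tail_alpha head_alpha !eqxx.
Qed.

Lemma rwalk_cost p : dlength G (rwalk p) + dlength G p = 3 * size p.
Proof.
elim: p => [|d p IH] //=.
rewrite /rwalk /= rev_cons -cats1 dlength_cat dlength_cons /= dlength_cons.
have := cost_alpha d; rewrite -/(rwalk p); rewrite /dlength /= in IH *; lia.
Qed.

End Good.
Section ToGood.
Variable G : plane_digraph.
Local Notation V := (pV G).
Local Notation D := (pD G).
Local Notation tail := (ptail G).
Local Notation alpha := (palpha G).
Local Notation sigma := (psigma G).
Local Notation orient := (porient G).
Local Notation head := (phead G).
Local Notation phi := (pphi G).

Hypothesis aa : forall d, alpha (alpha d) = d.
Hypothesis afix : forall d, alpha d != d.
Hypothesis sinj : injective sigma.

Lemma phi_injB : injective phi.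
Proof. by move=> x y /sinj /(can_inj aa). Qed.

Lemma card_D_even : #|D| = 2 * (#|D| %/ 2).
Proof.
have ainj : injective alpha := can_inj aa.
have := @fcard_order_set _ _ ainj 2 (mem (pred_of_simpl (@predT D))).
have -> : #|mem (pred_of_simpl (@predT D))| = #|D| by apply: eq_card.
move=> H; rewrite -H; first by rewrite mulnK // mulnC.
  apply/subsetP=> d _; rewrite inE; apply/eqP.
  apply: (@order_cycle _ _ [:: d; alpha d]); rewrite /= ?inE ?eqxx //=.
    by rewrite aa !eqxx.
  by rewrite andbT eq_sym afix.
by move=> x y _.
Qed.

Lemma faces_count :
  (forall d, interior_dart G d -> order phi d = 3) ->
  num_faces G = 1 + (#|D| - #|[pred d | outer_dart G d]|) %/ 3 /\
  3 * ((#|D| - #|[pred d | outer_dart G d]|) %/ 3) = #|D| - #|[pred d | outer_dart G d]|.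
Proof.
move=> H3.
have sym : connect_sym (frel phi) := fconnect_sym phi_injB.
have E1 : num_faces G = fcard phi D.
  by rewrite /num_faces /n_comp_mem; apply: eq_card => d; rewrite !inE andbT.
have E2 := n_compC (fconnect phi (pouter G)) (frel phi).
rewrite (n_comp_connect sym) in E2.
have cl : fclosed phi [predC fconnect phi (pouter G)].
  by apply: predC_closed; apply: connect_closed.
have E3 := @fcard_order_set _ _ phi_injB 3 _ _ cl.
have sub : [predC fconnect phi (pouter G)] \subset order_set phi 3.
  by apply/subsetP=> d; rewrite !inE => Hd; apply/eqP/H3.
have E4 := E3 sub.
have E5 : #|[predC fconnect phi (pouter G)]| = #|D| - #|[pred d | outer_dart G d]|.
  rewrite -(cardC [pred d | outer_dart G d]) addKn; apply: eq_card => d.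
  by rewrite !inE.
rewrite E5 in E4.
have E6 : fcard phi [predC fconnect phi (pouter G)] = (#|D| - #|[pred d | outer_dart G d]|) %/ 3.
  by rewrite -E4 mulnK.
split; first by rewrite E1 E2 E6.
by rewrite -E4 mulnK // mulnC.
Qed.

End ToGood.

Lemma path_walk (G : plane_digraph) (x : pV G) p :
  path (adj G) x p -> exists q, is_walk G x (last x p) q.
Proof.
elim: p x => [|y p IH] x /=; first by exists [::]; rewrite /= eqxx.
case/andP=> /existsP [d /andP [/eqP t /eqP h]] /IH [q Hq].
by exists (d :: q); rewrite /= t eqxx h.
Qed.

Lemma cat0_good (G : plane_digraph) : is_CAT0_planar G -> good G.
Proof.
case=> [[aa [afix [sinj [stail [sconn sor]]]]] [[nl simp] [conn [eu [tri [deg _]]]]]].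
have [F1 F2] := faces_count aa sinj (fun d H => (tri d H).1).
have De := card_D_even aa afix.
have bD : #|[pred d | outer_dart G d]| <= #|pD G| by apply: max_card.
constructor => //.
- move=> u v; have /connectP [p Hp ->] := conn u v; exact: path_walk.
- move: eu; rewrite /euler_planar /num_edges F1 => eu.
  move: F2 De eu bD.
  set X := (_ - _) %/ 3; set b := #|_|; set Dn := #|pD G|; set h := Dn %/ 2.
  lia.
Qed.

Section Count.
Variable G : plane_digraph.
Hypothesis gG : good G.
Local Notation V := (pV G).
Local Notation D := (pD G).
Local Notation tail := (ptail G).
Local Notation alpha := (palpha G).
Local Notation sigma := (psigma G).
Local Notation orient := (porient G).
Local Notation head := (phead G).
Local Notation phi := (pphi G).

Definition cout (v : V) := #|[pred d | (tail d == v) && outer_dart G d]|.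
Definition cand (w : V) := (cout w == 1) && (degree G w <= 3).

Lemma sum_tail (P : pred D) :
  \sum_(v : V) #|[pred d | (tail d == v) && P d]| = #|[pred d | P d]|.
Proof.
rewrite -sum1_card (partition_big tail xpredT) //=.
apply: eq_bigr => v _; rewrite -sum1_card; apply: eq_bigl => d.
by rewrite !inE andbC.
Qed.

Lemma sum_deg : \sum_(v : V) degree G v = #|D|.
Proof.
have E := @sum_tail xpredT.
have -> : #|D| = #|[pred d : D | xpredT d]| by apply: eq_card.
rewrite -E; apply: eq_bigr => v _; apply: eq_card => d; rewrite !inE andbT.
by [].
Qed.

Lemma cout_le v : cout v <= degree G v.
Proof. by apply: subset_leq_card; apply/subsetP => d; rewrite !inE => /andP []. Qed.

Lemma cout0_interior v : cout v = 0 -> interior_vertex G v.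
Proof.
move=> H0; apply/forallP => d; apply/implyP => od; apply/negP => /eqP tv.
have : 0 < cout v by apply/card_gt0P; exists d; rewrite !inE tv eqxx od.
by rewrite H0.
Qed.

End Count.

Lemma card_minus2 (T : finType) (x y : T) : x != y ->
  #|[pred v | (v != x) && (v != y)]| + 2 = #|T|.
Proof.
move=> xy; rewrite [#|T|](cardD1 x) [#|[predD1 T & x]|](cardD1 y) !inE eq_sym xy /=.
have -> : #|[predD1 [predD1 T & x] & y]| = #|[pred v | (v != x) && (v != y)]|.
  by apply: eq_card => v; rewrite !inE andbT andbC.
by rewrite addn2 !add1n.
Qed.

Section Count2.
Variable G : plane_digraph.
Hypothesis gG : good G.
Local Notation V := (pV G).
Local Notation D := (pD G).
Local Notation tail := (ptail G).

Lemma f_ge v : 0 < degree G v -> 3 <= degree G v + 2 * cout v /\ (cout v = 0 -> 6 <= degree G v).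
Proof.
move=> H; have cd := cout_le v; split; last by move/cout0_interior/(g_deg gG).
case E: (cout v) => [|c]; last by lia.
by have := g_deg gG (cout0_interior E); lia.
Qed.

Lemma deg_pos x y : x != y -> 0 < degree G x.
Proof.
move=> xy; have [[|d q] Hq] := g_conn gG x y; first by move: Hq => /= /eqP E; rewrite E eqxx in xy.
apply/card_gt0P; exists d; rewrite inE; by case/andP: Hq.
Qed.

Lemma cand_or_leaf x y : x != y ->
  [exists w, cand w && (w != x) && (w != y)] \/ (degree G x = 1 /\ cout x = 1).
Proof.
move=> xy; case E: [exists w, cand w && (w != x) && (w != y)]; [by left | right].
have H : forall v, v != x -> v != y -> 6 <= degree G v + 2 * cout v.
  move=> v vx vy; move/negbT/existsPn: E => /(_ v); rewrite vx vy !andbT /cand.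
  have cd := cout_le v.
  case E0: (cout v) => [|[|c]] /=.
  - by have := g_deg gG (cout0_interior E0); lia.
  - by rewrite -ltnNge; lia.
  - by lia.
have [fx fx0] := f_ge (deg_pos xy).
have yx : y != x by rewrite eq_sym.
  have [fy _] := f_ge (deg_pos yx).
have S : \sum_(v : V) (degree G v + 2 * cout v) = #|D| + 2 * #|[pred d | outer_dart G d]|.
  rewrite big_split /= sum_deg -big_distrr /=; congr (_ + 2 * _).
  exact: (sum_tail (fun d => outer_dart G d)).
have Eu := g_eu gG.
rewrite (bigD1 x) // (bigD1 y) /= in S; last by rewrite eq_sym xy.
set R := \sum_(i | _) _ in S.
have C2 := card_minus2 xy.
have HR : 6 * #|[pred v : V | (v != x) && (v != y)]| <= R.
  rewrite mulnC -sum_nat_const /R; apply: leq_sum => v; rewrite !inE => /andP [vx vy].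
  exact: H.
clearbody R.
move: (#|[pred v : V | (v != x) && (v != y)]|) C2 HR => K C2 HR.
move: (#|[pred d | outer_dart G d]|) S Eu => b S Eu.
have {}Eu : 6 * (K + 2) = 6 + #|D| + 2 * b by rewrite C2.
move: (#|D|) S Eu => nD S Eu.
have := cout_le x.
move: (cout x) (degree G x) (cout y) (degree G y) S fx fy fx0 => cx dx cy dy S fx fy fx0.
move=> cxd; case: (cx =P 0) => [c0|cx0].
  by have := fx0 c0; exfalso; lia.
split; lia.
Qed.
End Count2.


Lemma card_subpred (T : finType) (P Q : pred T) :
  #|[pred x : {x | P x} | Q (val x)]| = #|[pred x | P x && Q x]|.
Proof.
rewrite -(card_image val_inj); apply: eq_card => x; rewrite inE.
apply/imageP/andP => [[y Hy ->]|[Px Qx]]; first by split; [exact: valP | ].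
by exists (Sub x Px); rewrite // inE SubK.
Qed.

Section Local.
Variable G : plane_digraph.
Hypothesis gG : good G.
Local Notation V := (pV G).
Local Notation D := (pD G).
Local Notation tail := (ptail G).
Local Notation alpha := (palpha G).
Local Notation sigma := (psigma G).
Local Notation orient := (porient G).
Local Notation head := (phead G).
Local Notation phi := (pphi G).
Local Notation outer := (outer_dart G).

Lemma outer_phi d : outer (phi d) = outer d.
Proof. by rewrite /outer_dart -same_fconnect1_r //; apply: phi_inj. Qed.

Lemma interior_phi d : interior_dart G (phi d) = interior_dart G d.
Proof. by rewrite /interior_dart outer_phi. Qed.

Lemma phi3 d : interior_dart G d -> phi (phi (phi d)) = d.
Proof.
move=> H; have [H3 _] := g_tri gG H.
by have := iter_order (phi_inj gG) d; rewrite H3.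
Qed.

Lemma tail_iter_sigma n d : tail (iter n sigma d) = tail d.
Proof. by elim: n => //= n IH; rewrite (g_stail gG) IH. Qed.


Variable w : V.
Variable o : D.
Hypothesis to : tail o = w.
Hypothesis oo : outer o.
Hypothesis uo : forall d, tail d = w -> outer d -> d = o.
Hypothesis k3 : degree G w <= 3.

Local Notation k := (degree G w).
Definition ds i := iter i sigma o.
Arguments ds : simpl never.

Lemma ds_tail i : tail (ds i) = w.
Proof. by rewrite /ds tail_iter_sigma. Qed.

Lemma fconn_sigma_tail d : fconnect sigma o d = (tail d == w).
Proof.
apply/idP/idP => [H|/eqP H].
  have := @fconnect_invariant _ sigma _ tail _ o d H.
  by rewrite to => -> //; move=> x /=; rewrite /invariant /= (g_stail gG) eqxx.
by apply: (g_sconn gG); rewrite to H.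
Qed.

Lemma order_o : order sigma o = k.
Proof. by apply: eq_card => d; rewrite !inE fconn_sigma_tail. Qed.

Lemma k_gt0 : 0 < k.
Proof. by rewrite -order_o order_gt0. Qed.

Lemma ds_all d : tail d = w -> exists2 i, i < k & d = ds i.
Proof.
move=> H; have F : fconnect sigma o d by rewrite fconn_sigma_tail H.
exists (findex sigma o d); first by rewrite -order_o findex_max.
by rewrite /ds iter_findex.
Qed.

Lemma ds_inj i j : i < k -> j < k -> ds i = ds j -> i = j.
Proof.
move=> ik jk E.
by rewrite -(findex_iter (f := sigma) (x := o) (i := i)) ?order_o //
  -(findex_iter (f := sigma) (x := o) (i := j)) ?order_o // -/(ds i) -/(ds j) E.
Qed.

Lemma ds_k : ds k = o.
Proof. by rewrite /ds -order_o iter_order //; apply: (g_sinj gG). Qed.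

Lemma ds0 : ds 0 = o. Proof. by []. Qed.

Lemma sigma_ds i : sigma (ds i) = ds i.+1.
Proof. by []. Qed.

Lemma ds_outer i : i < k -> outer (ds i) = (i == 0).
Proof.
move=> ik; case: i ik => [|i] ik; first by rewrite ds0 oo.
apply/negP => H; have := uo (ds_tail _) H; rewrite -ds0 => /ds_inj.
by move=> /(_ ik k_gt0).
Qed.

Definition ah i := head (ds i).

Lemma ah_neq i : ah i != w.
Proof. by rewrite /ah -(ds_tail i); rewrite eq_sym; apply: (g_noloop gG). Qed.

Lemma ah_inj i j : i < k -> j < k -> ah i = ah j -> i = j.
Proof.
move=> ik jk E; apply: ds_inj => //; apply: (g_simple gG) => //.
by rewrite !ds_tail.
Qed.

Definition e i := phi (ds i).

Section Tri.
Variable i : nat.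
Hypothesis i0 : 0 < i.
Hypothesis ik : i < k.

Lemma ds_int : interior_dart G (ds i).
Proof. by rewrite /interior_dart ds_outer //; case: i i0. Qed.

Lemma phi_e : phi (e i) = alpha (ds i.-1).
Proof.
have := phi3 ds_int; rewrite -/(e i).
case: i i0 ik => // j _ _.
rewrite /ds iterS -/(ds j) => /(g_sinj gG) => E.
by rewrite /= -E (g_aa gG).
Qed.

Lemma tail_e : tail (e i) = ah i.
Proof. by rewrite /e (tail_phi gG). Qed.

Lemma head_e : head (e i) = ah i.-1.
Proof. by rewrite -(tail_phi gG) phi_e. Qed.

Lemma orient_e : orient (e i) = orient (ds i).
Proof. by have [_ ] := g_tri gG ds_int. Qed.

Lemma orient_prev : orient (ds i.-1) = ~~ orient (ds i).
Proof.
have I : interior_dart G (e i) by rewrite /e interior_phi ds_int.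
have [_ H] := g_tri gG I.
by rewrite phi_e (g_or gG) orient_e in H; rewrite -H negbK.
Qed.

End Tri.

Definition z := alpha (ds k.-1).

Lemma phi_z : phi z = o.
Proof.
rewrite /z /pphi (g_aa gG) sigma_ds.
by rewrite prednK ?k_gt0 // ds_k.
Qed.

Lemma z_outer : outer z.
Proof. by rewrite -outer_phi phi_z. Qed.

Lemma head_z : head z = w.
Proof. by rewrite /z /phead (g_aa gG) ds_tail. Qed.

Lemma tail_z : tail z = ah k.-1.
Proof. by []. Qed.

Definition alive (d : D) := (tail d != w) && (head d != w).

Lemma dead_cases d : ~~ alive d ->
  (exists2 i, i < k & d = ds i) \/ (exists2 i, i < k & d = alpha (ds i)).
Proof.
rewrite /alive negb_and !negbK; case/orP => /eqP H; first by left; apply: ds_all.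
right; have [i ik E] := ds_all (d := alpha d) H; exists i => //.
by rewrite -E (g_aa gG).
Qed.

Lemma dead_outer d : ~~ alive d -> outer d -> d = o \/ d = z.
Proof.
case/dead_cases => [[i ik ->]|[i ik ->]] H.
  by left; move: H; rewrite ds_outer // => /eqP ->.
right; rewrite /z; congr alpha; congr ds.
move: H; rewrite -outer_phi /pphi (g_aa gG) sigma_ds.
case: (ltngtP i.+1 k) => [lt|gt|eq].
- by rewrite ds_outer.
- by move=> _; lia.
- by move=> _; lia.
Qed.

Lemma alive_alpha d : alive (alpha d) = alive d.
Proof. by rewrite /alive /phead (g_aa gG) andbC. Qed.

Lemma o_dead : ~~ alive o. Proof. by rewrite /alive to eqxx. Qed.
Lemma z_dead : ~~ alive z. Proof. by rewrite /alive head_z eqxx andbF. Qed.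

Lemma z_neq_o : z != o.
Proof. by apply/eqP => E; have := head_z; rewrite E => H; have := g_noloop gG o; rewrite H to eqxx. Qed.


Lemma cost_or d : cost d = if orient d then 1 else 2.
Proof. by []. Qed.

Lemma alive_e i : 0 < i -> i < k -> alive (e i).
Proof.
move=> i0 ik; rewrite /alive (tail_e i) (head_e i0 ik) !ah_neq.
by [].
Qed.

Lemma local_reroute i j : i < k -> j < k -> exists r,
  [/\ all alive r, is_walk G (ah j) (ah i) r, size r <= 2 &
      dlength G r <= cost (alpha (ds j)) + cost (ds i)].
Proof.
move=> ik jk.
have c1 := cost_ge1 (alpha (ds j)); have c2 := cost_ge1 (ds i).
have [->|ij] := eqVneq i j; first by exists [::]; rewrite /= eqxx.
have [ji|] := eqVneq j i.+1.
  subst j; have j0 : 0 < i.+1 by [].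
  exists [:: e i.+1]; rewrite /= (alive_e j0 jk) (tail_e i.+1) (head_e j0 jk) /= !eqxx.
  by split => //; rewrite dlength_cons dlength_nil; have := cost_le2 (e i.+1); lia.
move=> nji.
have [ij1|] := eqVneq i j.+1.
  subst i; have i0 : 0 < j.+1 by [].
  exists [:: alpha (e j.+1)]; rewrite /= alive_alpha (alive_e i0 ik) (head_alpha gG).
  rewrite tail_alpha (tail_e j.+1) /= (head_e i0 ik) /= !eqxx.
  by split => //; rewrite dlength_cons dlength_nil; have := cost_le2 (alpha (e j.+1)); lia.
move=> nij1.
have k3' : k <= 3 := k3.
have [[i2 j0]|[i0 j2]] : (i = 0 /\ j = 2) \/ (i = 2 /\ j = 0).
  have i3 : i < 3 by lia. have j3 : j < 3 by lia.
  move: ij nji nij1; case: i i3 {ik c2} => [|[|[|i]]] //= _; case: j j3 {jk c1} => [|[|[|j]]] //= _.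
  - by left.
  - by right.
- subst i j.
  have t1 : 0 < 1 by []. have t2 : 0 < 2 by [].
  have k1 : 1 < k by lia. 
  exists [:: e 2; e 1]; rewrite /= (alive_e t2 jk) (alive_e t1 k1).
  rewrite (tail_e 2) (head_e t2 jk) (tail_e 1) (head_e t1 k1) /= !eqxx.
  split => //; rewrite !dlength_cons dlength_nil !cost_or (g_or gG).
  rewrite (orient_e t2 jk) (orient_e t1 k1) (orient_prev t1 k1) (orient_prev t2 jk).
  by case: (orient (ds 2)).
- subst i j.
  have t1 : 0 < 1 by []. have t2 : 0 < 2 by [].
  have k1 : 1 < k by lia.
  exists [:: alpha (e 1); alpha (e 2)]; rewrite /= !alive_alpha (alive_e t2 ik) (alive_e t1 k1).
  rewrite !tail_alpha !(head_alpha gG) (tail_e 2) (head_e t2 ik) (tail_e 1) (head_e t1 k1) /= !eqxx.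
  split => //; rewrite !dlength_cons dlength_nil !cost_or !(g_or gG).
  rewrite (orient_e t2 ik) (orient_e t1 k1) (orient_prev t1 k1) (orient_prev t2 ik).
  by case: (orient (ds 2)).
Qed.

Lemma reroute n : forall q x y, size q <= n -> x != w -> y != w -> is_walk G x y q ->
  exists q', [/\ all alive q', is_walk G x y q', size q' <= size q &
              dlength G q' <= dlength G q].
Proof.
elim: n => [|n IH] [|d q] x y //= sz xw yw.
- by move=> H; exists [::].
- by move=> H; exists [::].
case/andP => /eqP tx Hq.
case Ad : (alive d).
  have hw : head d != w by case/andP: Ad.
  have [q' [A1 W1 S1 L1]] := IH q _ _ sz hw yw Hq.
  exists (d :: q'); rewrite /= Ad A1 tx eqxx W1 !dlength_cons; split => //; lia.
have hd : head d = w.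
  by apply/eqP; move: Ad; rewrite /alive tx xw /= => /negbFE.
case: q sz Hq => [|d2 q] sz.
  by move=> /= /eqP E; rewrite -E hd eqxx in yw.
rewrite /= => /andP [/eqP t2 Hq]; rewrite hd in t2.
have [i ik Ei] := ds_all t2.
have [j jk Ej] := ds_all (d := alpha d) hd.
have hd2 : head d2 = ah i by rewrite Ei.
have hw2 : ah i != w := ah_neq i.
rewrite hd2 in Hq.
have [q' [A1 W1 S1 L1]] := IH q _ _ (ltnW sz) hw2 yw Hq.
have [r [A2 W2 S2 L2]] := local_reroute ik jk.
have xj : x = ah j by rewrite -tx /ah -Ej (head_alpha gG).
exists (r ++ q'); rewrite all_cat A2 A1 size_cat dlength_cat /=.
rewrite xj (is_walk_cat W2 W1) !dlength_cons; split => //; first by lia.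
rewrite -Ej (g_aa gG) -Ei in L2; lia.
Qed.

Definition Vr : finType := {v : V | v != w}.
Definition Dr : finType := {d : D | alive d}.

Lemma alive_tailP d : alive d -> tail d != w.
Proof. by case/andP. Qed.

Definition sraw (d : D) := if alive (sigma d) then sigma d else sigma (sigma d).
Definition rtail (d : Dr) : Vr := Sub (tail (val d)) (alive_tailP (valP d)).
Definition ralpha (d : Dr) : Dr := insubd d (alpha (val d)).
Definition rsigma (d : Dr) : Dr := insubd d (sraw (val d)).
Definition rorient (d : Dr) : bool := orient (val d).
Definition rm (o' : Dr) : plane_digraph := @PlaneDigraph Vr Dr rtail ralpha rsigma rorient o'.

Lemma alive_sraw d : alive d -> alive (sraw d).
Proof.
move=> Ad; rewrite /sraw; case As: (alive (sigma d)) => //.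
have ts : tail (sigma d) = tail d := g_stail gG d.
have tw : tail d != w by case/andP: Ad.
have hs : head (sigma d) = w.
  by apply/eqP; move: As; rewrite /alive ts tw /= => /negbFE.
rewrite /alive (g_stail gG) ts tw /=; apply/eqP => hss.
have E : sigma (sigma d) = sigma d by apply: (g_simple gG); rewrite ?(g_stail gG) // hss hs.
have E2 : sigma d = d by apply: (g_sinj gG).
by rewrite E2 Ad in As.
Qed.

Section RmG.
Variable o' : Dr.
Local Notation G' := (rm o').

Lemma val_rtail d : val (ptail G' d) = tail (val d).
Proof. by []. Qed.

Lemma val_ralpha d : val (palpha G' d) = alpha (val d).
Proof. by rewrite /= /ralpha val_insubd alive_alpha (valP d). Qed.

Lemma val_rsigma d : val (psigma G' d) = sraw (val d).
Proof. by rewrite /= /rsigma val_insubd alive_sraw // (valP d). Qed.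

Lemma val_rhead d : val (phead G' d) = head (val d).
Proof. by rewrite /phead val_rtail val_ralpha. Qed.

Definition phiR (x : D) := if alive (phi x) then phi x else sigma (phi x).

Lemma val_rphi d : val (pphi G' d) = phiR (val d).
Proof. by rewrite /pphi val_rsigma val_ralpha. Qed.

Lemma val_iter_rphi n d : val (iter n (pphi G') d) = iter n phiR (val d).
Proof. by elim: n => // n IH; rewrite !iterS val_rphi IH. Qed.

Lemma rm_walk x y p : is_walk G' x y p = is_walk G (val x) (val y) (map val p).
Proof.
elim: p x => [|d p IH] x /=; first by rewrite val_eqE.
by rewrite IH -val_eqE val_rtail val_rhead.
Qed.

Lemma rm_dlength p : dlength G' p = dlength G (map val p).
Proof. by elim: p => //= d p IH; rewrite !dlength_cons IH. Qed.

Lemma rm_lift x y q : all alive q -> is_walk G (val x) (val y) q ->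
  exists p, map val p = q /\ is_walk G' x y p.
Proof.
elim: q x => [|d q IH] x /=.
  by move=> _ /eqP H; exists [::]; split => //=; apply/eqP; apply: val_inj.
case/andP=> Ad Aq /andP [/eqP tx Hq].
have hw : head d != w by case/andP: Ad.
have [p [Ep Hp]] := IH (Sub (head d) hw) Aq Hq.
exists ((Sub d Ad : Dr) :: p); rewrite /= Ep; split => //.
have -> : rtail (ralpha (Sub d Ad)) = Sub (head d) hw.
  by apply: val_inj; have := val_rhead (Sub d Ad : Dr).
rewrite Hp andbT; apply/eqP; apply: val_inj; by rewrite /= tx.
Qed.

End RmG.

Lemma iter_fix (f : D -> D) x n : f x = x -> iter n f x = x.
Proof. by move=> H; elim: n => //= n ->. Qed.

Lemma fixed_sigma_all x : sigma x = x -> forall d, tail d = tail x -> d = x.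
Proof.
move=> H d td; have F : fconnect sigma x d by apply: (g_sconn gG).
by rewrite -(iter_findex F) iter_fix.
Qed.

Lemma dartsw1 : k = 1 -> forall d, tail d = w -> d = o.
Proof. by move=> k1 d /ds_all [i]; rewrite k1; case: i. Qed.

Hypothesis Hu : exists u : V, (u != w) && (u != ah 0).

Lemma alive_phio : alive (phi o).
Proof.
rewrite /alive (tail_phi gG) -/(ah 0) ah_neq /=.
apply/negP => /eqP hw.
have dd : ~~ alive (phi o) by rewrite /alive hw eqxx andbF.
have Ea : phi o = alpha o.
  case/dead_cases: dd => [[i ik Ei]|[j jk Ej]].
    by have := ds_tail i; rewrite -Ei (tail_phi gG) => E; have := ah_neq 0; rewrite /ah ds0 E eqxx.
  have tj : ah j = ah 0 by rewrite /ah -tail_alpha -Ej (tail_phi gG).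
  by rewrite Ej (ah_inj jk k_gt0 tj).
have fx : sigma (alpha o) = alpha o by [].
have all0 := fixed_sigma_all fx.
have [k1|k2] : k = 1 \/ 1 < k by have := k_gt0; lia.
  have [u /andP [uw ua]] := Hu.
  have [q Hq] := g_conn gG (ah 0) u.
  suff : (u == w) || (u == ah 0) by rewrite (negbTE uw) (negbTE ua).
  have stay : forall q v, is_walk G v u q -> (v == w) || (v == ah 0) -> (u == w) || (u == ah 0).
    elim=> [|d q' IH] v /=; first by move=> /eqP ->.
    case/andP => /eqP tv Hq' Hv; apply: IH Hq' _.
    case/orP: Hv => /eqP Hv.
      by have := dartsw1 k1 (d := d); rewrite tv Hv => /(_ erefl) ->; rewrite eqxx orbT.
    have := all0 d; rewrite tail_alpha tv Hv => /(_ erefl) ->.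
    by rewrite (head_alpha gG) to eqxx.
  by apply: stay Hq _; rewrite eqxx orbT.
have t1 : 0 < 1 by [].
have E1 : alpha (e 1) = alpha o.
  by apply: all0; rewrite tail_alpha (head_e t1 k2).
have := tail_e 1; rewrite -(g_aa gG (e 1)) E1 (g_aa gG) to => E.
by have := ah_neq 1; rewrite -E eqxx.
Qed.

Lemma phiR_alive x : alive (phi x) -> phiR x = phi x.
Proof. by rewrite /phiR => ->. Qed.

Lemma phiR_dead x : alive x -> ~~ alive (phi x) ->
  exists2 j, j < k & phi x = alpha (ds j) /\ phiR x = phi (ds j).
Proof.
move=> Ax Dx; case/dead_cases: (Dx) => [[i ik Ei]|[j jk Ej]].
  have := ds_tail i; rewrite -Ei (tail_phi gG) => E.
  by move: Ax; rewrite /alive E eqxx andbF.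
exists j => //; split => //; by rewrite /phiR (negbTE Dx) Ej.
Qed.

Definition N := [seq e i | i <- iota 1 k.-1].

Lemma inNP x : reflect (exists2 i, 0 < i < k & x = e i) (x \in N).
Proof.
apply: (iffP mapP) => [[i Hi ->]|[i Hi ->]]; exists i => //.
  by move: Hi; rewrite mem_iota; lia.
by rewrite mem_iota; lia.
Qed.

Lemma N_alive x : x \in N -> alive x.
Proof. by case/inNP => i /andP [i0 ik] ->; apply: alive_e. Qed.

Lemma e_interior i : 0 < i -> i < k -> interior_dart G (e i).
Proof. by move=> i0 ik; rewrite /e interior_phi ds_int. Qed.

Lemma N_notouter x : x \in N -> ~~ outer x.
Proof. by case/inNP => i /andP [i0 ik] ->; apply: e_interior. Qed.

Definition Sx x := outer x || (x \in N).

Lemma S_phi_ds j : j < k -> Sx (phi (ds j)).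
Proof.
case: j => [|j] jk; first by rewrite /Sx outer_phi ds0 oo.
by rewrite /Sx; apply/orP; right; apply/inNP; exists j.+1.
Qed.

Lemma S_closed x : alive x -> Sx x -> Sx (phiR x).
Proof.
move=> Ax; case/orP => [Ox|/inNP [i /andP [i0 ik] ->]].
  case Ap: (alive (phi x)); first by rewrite phiR_alive // /Sx outer_phi Ox.
  have [j jk [E1 ->]] := phiR_dead Ax (negbT Ap).
  exact: S_phi_ds.
have Dp : ~~ alive (phi (e i)) by rewrite (phi_e i0 ik) alive_alpha /alive ds_tail eqxx.
rewrite /phiR (negbTE Dp) (phi_e i0 ik).
have := @S_phi_ds i.-1; apply; lia.
Qed.

Lemma outer_conn x y : outer x -> outer y -> fconnect phi x y.
Proof.
move=> Ox Oy; rewrite /outer_dart in Ox Oy.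
rewrite (fconnect_sym (phi_inj gG)) in Ox.
exact: connect_trans Ox Oy.
Qed.

Lemma reach_outer x : alive x -> outer x -> exists m, iter m phiR (phi o) = x.
Proof.
move=> Ax Ox.
have F := outer_conn oo Ox.
have [n En] : exists n, iter n phi o = x by exists (findex phi o x); rewrite iter_findex.
case: n En => [|n] En; first by rewrite -En /= in Ax; rewrite (negbTE o_dead) in Ax.
rewrite iterSr in En.
have key : forall n, alive (iter n phi (phi o)) -> exists m, iter m phiR (phi o) = iter n phi (phi o).
  elim=> [|n' IH] A'; first by exists 0.
  set t := iter n' phi (phi o).
  have Ot : outer t by rewrite /t; elim: (n') => [|n'' IHn] /=; rewrite outer_phi.
  case At: (alive t).
    have [m Em] := IH At; exists m.+1; rewrite iterS Em phiR_alive //.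
  have [Eo|Ez] := dead_outer (negbT At) Ot.
    by exists 0; rewrite iterS -/t Eo.
  by move: A'; rewrite iterS -/t Ez phi_z (negbTE o_dead).
by rewrite -En; apply: key; rewrite En.
Qed.

Lemma z_pred_alive : alive (finv phi z).
Proof.
set y := finv phi z.
have py : phi y = z by rewrite /y f_finv //; apply: phi_inj.
have Oy : outer y by rewrite -outer_phi py z_outer.
case Ay: (alive y) => //; have [Eo|Ez] := dead_outer (negbT Ay) Oy.
  by move: py; rewrite Eo => py; have := alive_phio; rewrite py (negbTE z_dead).
by move: py; rewrite Ez phi_z => py; have := z_neq_o; rewrite py eqxx.
Qed.

Lemma reach_N x : x \in N -> exists m, iter m phiR (phi o) = x.
Proof.
case/inNP => i /andP [i0 ik] ->.
set y := finv phi z.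
have py : phi y = z by rewrite /y f_finv //; apply: phi_inj.
have Oy : outer y by rewrite -outer_phi py z_outer.
have [m Em] := reach_outer z_pred_alive Oy.
have Ry : phiR y = e k.-1.
  by rewrite /phiR py (negbTE z_dead).
have k3' : k <= 3 := k3.
have [E1|E2] : i = k.-1 \/ i = k.-2 by lia.
  by exists m.+1; rewrite iterS Em -/y Ry E1.
have k2 : 0 < k.-1 < k by lia.
exists m.+2; rewrite !iterS Em -/y Ry.
have Dp : ~~ alive (phi (e k.-1)) by rewrite (@phi_e k.-1) ?alive_alpha /alive ?ds_tail ?eqxx //; lia.
rewrite /phiR (negbTE Dp) (@phi_e k.-1); try lia.
by rewrite E2.
Qed.

Lemma int_closed x : alive x -> ~~ Sx x -> alive (phi x) /\ ~~ Sx (phi x).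
Proof.
move=> Ax; rewrite /Sx negb_or => /andP [nOx nNx].
have A1 : alive (phi x).
  case Ap: (alive (phi x)) => //; have [j jk [E1 _]] := phiR_dead Ax (negbT Ap).
  have [jk1|jk1] : j.+1 < k \/ j.+1 = k by lia.
    have j0 : 0 < j.+1 by [].
    have Ex : x = e j.+1 by apply: (phi_inj gG); rewrite (phi_e j0 jk1).
    by case/negP: nNx; rewrite Ex; apply/inNP; exists j.+1 => //; lia.
  have : outer (phi x) by rewrite E1 -/(ds j) /= ; rewrite (_ : j = k.-1) ?z_outer //; lia.
  by rewrite outer_phi (negbTE nOx).
split => //; rewrite outer_phi (negbTE nOx) /=; apply/negP => /inNP [i /andP [i0 ik] Ei].
have := ds_tail i; rewrite -[ds i](phi_inj gG Ei) => E.
by move: Ax; rewrite /alive E eqxx.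
Qed.

Lemma uniq_N : uniq N.
Proof.
rewrite map_inj_in_uniq ?iota_uniq // => i j; rewrite !mem_iota => Hi Hj E.
apply: ds_inj; try lia; exact: (phi_inj gG E).
Qed.

Lemma size_N : size N = k.-1.
Proof. by rewrite size_map size_iota. Qed.

Lemma card_aliveS : #|[pred x | alive x && Sx x]| = #|[pred x | alive x && outer x]| + k.-1.
Proof.
rewrite -size_N -(card_uniqP uniq_N).
rewrite -(cardUI [pred x | alive x && outer x] (mem N)).
have -> : #|[predI [pred x | alive x && outer x] & mem N]| = 0.
  apply: eq_card0 => x; rewrite !inE; apply/negP => /andP [/andP [_ Ox] /N_notouter].
  by rewrite Ox.
rewrite addn0; apply: eq_card => x; rewrite !inE /Sx.
case Nx: (x \in N); last by rewrite !orbF.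
by rewrite (N_alive Nx) !orbT.
Qed.

Lemma card_outer_alive : #|[pred x | alive x && outer x]| + 2 = #|[pred x | outer x]|.
Proof.
rewrite -(cardID [pred x | alive x] [pred x | outer x]).
congr (_ + _); first by apply: eq_card => x; rewrite !inE andbC.
have := card2 o z; rewrite eq_sym z_neq_o => <-.
apply: eq_card => x; rewrite !inE; apply/orP/andP.
  by case=> /eqP ->; split; rewrite ?o_dead ?z_dead ?oo ?z_outer.
by case=> Ax Ox; case: (dead_outer Ax Ox) => ->; rewrite eqxx ?orbT; [left|right].
Qed.

Lemma card_headw : #|[pred x | head x == w]| = k.
Proof.
rewrite /degree -[RHS](card_image (alpha_inj gG)); apply: eq_card => x; rewrite !inE.
apply/eqP/imageP => [H|[y Hy ->]]; last by rewrite (head_alpha gG); move: Hy; rewrite inE => /eqP.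
by exists (alpha x); rewrite ?(g_aa gG) // inE; apply/eqP.
Qed.

Lemma card_alive : #|[pred x | alive x]| + 2 * k = #|D|.
Proof.
rewrite -(cardC [pred x | alive x]).
have -> : #|[predC [pred x | alive x]]| = #|[predU [pred x | tail x == w] & [pred x | head x == w]]|.
  by apply: eq_card => x; rewrite !inE /alive negb_and !negbK.
have := cardUI [pred x | tail x == w] [pred x | head x == w].
have -> : #|[predI [pred x | tail x == w] & [pred x | head x == w]]| = 0.
  apply: eq_card0 => x; rewrite !inE; apply/negP => /andP [/eqP t /eqP h].
  by have := g_noloop gG x; rewrite t h eqxx.
rewrite addn0 card_headw => ->; rewrite /degree.
have -> : #|[pred d | tail d == w]| = k by [].
by rewrite mul2n addnn.
Qed.

Section G1.
Definition o1 : Dr := Sub (phi o) alive_phio.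
Local Notation G1 := (rm o1).

Lemma outer_rm d : outer_dart G1 d = Sx (val d).
Proof.
apply/idP/idP => [H|H].
  rewrite -(iter_findex H) val_iter_rphi.
  elim: (findex _ _ _) => [|n IH]; first by rewrite /= /Sx outer_phi oo.
  have := valP (iter n (pphi G1) o1); rewrite val_iter_rphi => An.
  by rewrite iterS; apply: S_closed.
have [m Em] : exists m, iter m phiR (phi o) = val d.
  case/orP: H => [Ox|Nx]; last exact: reach_N.
  exact: reach_outer (valP d) Ox.
have -> : d = iter m (pphi G1) o1 by apply: val_inj; rewrite val_iter_rphi.
exact: fconnect_iter.
Qed.

Lemma card_outer_rm : #|[pred d | outer_dart G1 d]| + 2 = #|[pred x | outer x]| + k.-1.
Proof.
have -> : #|[pred d | outer_dart G1 d]| = #|[pred x | alive x && Sx x]|.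
  rewrite -card_subpred; apply: eq_card => d; by rewrite !inE outer_rm.
rewrite card_aliveS -card_outer_alive; lia.
Qed.

Lemma card_D_rm : #|pD G1| + 2 * k = #|D|.
Proof. by rewrite -card_alive /= card_sig. Qed.

Lemma card_V_rm : #|pV G1| + 1 = #|V|.
Proof.
rewrite /= card_sig.
have -> : #|[pred v : V | v != w]| = #|predC1 w| by apply: eq_card.
rewrite cardC1 addn1 prednK //; apply/card_gt0P; by exists w.
Qed.

End G1.

Lemma tail_sraw x : tail (sraw x) = tail x.
Proof. by rewrite /sraw; case: ifP; rewrite !(g_stail gG). Qed.

Lemma val_iter_rsigma o' n d : val (iter n (psigma (rm o')) d) = iter n sraw (val d).
Proof. by elim: n => // n IH; rewrite !iterS val_rsigma IH. Qed.

Lemma sraw_reach n : forall x, alive x -> alive (iter n sigma x) ->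
  exists m, iter m sraw x = iter n sigma x.
Proof.
elim/ltn_ind: n => n IH x Ax An.
case: n IH An => [|n] IH An; first by exists 0.
case At: (alive (iter n sigma x)).
  have [m Em] := IH n (ltnSn n) x Ax At.
  by exists m.+1; rewrite iterS Em /sraw -iterS An.
case: n IH An At => [|n] IH An At; first by rewrite /= Ax in At.
have tt : tail (iter n.+1 sigma x) = tail x by rewrite tail_iter_sigma.
have tt2 : tail (iter n sigma x) = tail x by rewrite tail_iter_sigma.
have xw : tail x != w by case/andP: Ax.
have ht : head (iter n.+1 sigma x) = w.
  by apply/eqP; move: At; rewrite /alive tt xw /= => /negbFE.
case At2: (alive (iter n sigma x)).
  have [m Em] := IH n (leqW (ltnSn n)) x Ax At2.
  exists m.+1; rewrite iterS Em /sraw -iterS At.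
  by rewrite -iterS.
have ht2 : head (iter n sigma x) = w.
  by apply/eqP; move: At2; rewrite /alive tt2 xw /= => /negbFE.
have E : iter n.+1 sigma x = iter n sigma x.
  by apply: (g_simple gG); rewrite ?tt ?tt2 // ht ht2.
have E2 : iter n.+2 sigma x = iter n.+1 sigma x by rewrite iterS E.
by rewrite E2 At in An.
Qed.

Section G1b.
Local Notation G1 := (rm o1).

Lemma S_at_ah j : j < k -> exists2 x, alive x && Sx x & tail x = ah j.
Proof.
move=> jk; exists (phi (ds j)); last by rewrite (tail_phi gG).
rewrite S_phi_ds // andbT.
case: j jk => [|j] jk; first exact: alive_phio.
exact: alive_e.
Qed.

Lemma good_rm : good G1.
Proof.
constructor.
- by move=> d; apply: val_inj; rewrite !val_ralpha (g_aa gG).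
- move=> a b /(congr1 val); rewrite !val_rsigma /sraw => E; apply: val_inj.
  have Aa := valP a; have Ab := valP b.
  move: E; case: ifP => Ha; case: ifP => Hb E.
  + exact: (g_sinj gG).
  + by have E' := g_sinj gG E; rewrite E' Hb in Aa.
  + by have E' := g_sinj gG E; rewrite -E' Ha in Ab.
  + exact: (g_sinj gG (g_sinj gG E)).
- by move=> d; apply: val_inj; rewrite val_rtail val_rsigma tail_sraw.
- move=> d1 d2 /(congr1 val); rewrite !val_rtail => E.
  have F := g_sconn gG E.
  have Ad2 : alive (iter (findex sigma (val d1) (val d2)) sigma (val d1)).
    by rewrite (iter_findex F) (valP d2).
  have [m Em] := sraw_reach (valP d1) Ad2.
  have -> : d2 = iter m (psigma G1) d1.
    by apply: val_inj; rewrite val_iter_rsigma Em (iter_findex F).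
  exact: fconnect_iter.
- by move=> d; rewrite /= /rorient val_ralpha (g_or gG).
- move=> d; rewrite -val_eqE val_rtail val_rhead; exact: (g_noloop gG).
- move=> d d' /(congr1 val) E1 /(congr1 val) E2; apply: val_inj.
  by apply: (g_simple gG); move: E1 E2; rewrite /phead !val_rtail ?val_ralpha.
- move=> u v; have [q Hq] := g_conn gG (val u) (val v).
  have [q' [A1 W1 _ _]] := reroute (leqnn (size q)) (valP u) (valP v) Hq.
  have [p [_ Hp]] := rm_lift o1 A1 W1.
  by exists p.
- have E1 := card_V_rm; have E2 := card_D_rm; have E3 := card_outer_rm.
  have E4 := g_eu gG; have kg := k_gt0.
  move: (#|pV G1|) (#|pD G1|) (#|[pred d | outer_dart G1 d]|) E1 E2 E3 => a b c E1 E2 E3.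
  move: (#|V|) (#|D|) (#|[pred x | outer x]|) E1 E2 E3 E4 => A B C E1 E2 E3 E4.
  lia.
- move=> d H.
  have nS : ~~ Sx (val d) by rewrite /interior_dart outer_rm in H.
  set x := val d.
  have [A1 S1] := int_closed (valP d) nS.
  have [A2 S2] := int_closed A1 S1.
  have Ix : interior_dart G x by rewrite /interior_dart; move: nS; rewrite /Sx negb_or => /andP [].
  have V1 : val (pphi G1 d) = phi x by rewrite val_rphi phiR_alive.
  have V2 : val (pphi G1 (pphi G1 d)) = phi (phi x) by rewrite val_rphi V1 phiR_alive.
  have V3 : pphi G1 (pphi G1 (pphi G1 d)) = d.
    have P3 := phi3 Ix.
    have A3 : alive (phi (phi (phi x))) by rewrite P3 (valP d).
    by apply: val_inj; rewrite val_rphi V2 (phiR_alive A3) P3.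
  have [O3 Or] := g_tri gG Ix.
  split; last by rewrite /= /rorient V1 Or.
  apply: (@order_cycle _ _ [:: d; pphi G1 d; pphi G1 (pphi G1 d)]); last by rewrite mem_head.
    by rewrite /= !eqxx /= andbT; apply/eqP; exact: V3.
  rewrite -(map_inj_uniq val_inj) /= V1 V2 -/x.
  by have := orbit_uniq phi x; rewrite /orbit O3.
- move=> v H.
  have H' : forall x, alive x -> Sx x -> tail x != val v.
    move=> x Ax Sxx; have := forallP H (Sub x Ax); rewrite outer_rm /= Sxx /= => Hx.
    by rewrite -val_eqE in Hx.
  have vw : val v != w := valP v.
  have Al : forall x, tail x = val v -> alive x.
    move=> x tx; case Ax: (alive x) => //.
    case/dead_cases: (negbT Ax) => [[i ik Ei]|[j jk Ej]].
      by move: vw; rewrite -tx Ei ds_tail eqxx.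
    have [y /andP [Ay Sy] ty] := S_at_ah jk.
    by move: (H' y Ay Sy); rewrite ty -tx Ej tail_alpha /ah eqxx.
  have Iv : interior_vertex G (val v).
    apply/forallP => x; apply/implyP => Ox; apply/negP => /eqP tx.
    by move: (H' x (Al x tx) (introT orP (or_introl Ox))); rewrite tx eqxx.
  have -> : degree G1 v = degree G (val v).
    rewrite /degree.
    have -> : #|[pred d : pD G1 | ptail G1 d == v]| = #|[pred d : Dr | tail (val d) == val v]|.
      by apply: eq_card => d; rewrite !inE -val_eqE.
    etransitivity; first exact: (card_subpred alive (fun x => tail x == val v)).
    apply: eq_card => x; rewrite !inE.
    by case: (tail x =P val v) => [/Al ->|]; rewrite ?andbF.
  exact: (g_deg gG Iv).
Qed.

End G1b.

End Local.

Lemma card1_eq (T : finType) (A : pred T) a b :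
  #|[pred x | A x]| = 1 -> A a -> A b -> a = b.
Proof.
move=> H Aa Ab; move: H; rewrite (cardD1 a) inE Aa add1n => [[]] H.
apply/eqP; apply: contraT => ab.
have : 0 < #|[predD1 [pred x | A x] & a]| by apply/card_gt0P; exists b; rewrite !inE eq_sym ab.
by rewrite H.
Qed.

Lemma removal (G : plane_digraph) (w x y : pV G) : good G -> cand w ->
  w != x -> w != y -> x != y ->
  exists G' : plane_digraph, good G' /\ #|pV G'| < #|pV G| /\
    exists (fv : pV G' -> pV G) (fd : pD G' -> pD G), injective fv /\
     (forall a b p, is_walk G' a b p -> is_walk G (fv a) (fv b) (map fd p) /\
                    dlength G (map fd p) = dlength G' p) /\
     (forall u v q, u != w -> v != w -> is_walk G u v q ->
        exists a b p, [/\ fv a = u, fv b = v, is_walk G' a b p & dlength G' p <= dlength G q]).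
Proof.
move=> gG /andP [/eqP c1 k3] wx wy xy.
have [o] : exists o, (ptail G o == w) && outer_dart G o.
  have : 0 < cout w by rewrite c1.
  by move/card_gt0P => [o Ho]; exists o; rewrite inE in Ho.
case/andP => /eqP to oo.
have uo : forall d, ptail G d = w -> outer_dart G d -> d = o.
  move=> d td od; apply: (card1_eq (A := fun d => (ptail G d == w) && outer_dart G d)) c1 _ _.
    by rewrite td eqxx od.
  by rewrite to eqxx oo.
have Hu : exists u, (u != w) && (u != ah o 0).
  case: (x =P ah o 0) => [ex|nx]; last by exists x; rewrite eq_sym wx; apply/eqP.
  exists y; rewrite eq_sym wy /=; apply/eqP => ey; by rewrite ex ey eqxx in xy.
exists (rm (o1 gG to oo uo k3 Hu)); split; first exact: good_rm.
split; first by have := card_V_rm gG to oo uo k3 Hu; lia.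
exists val, val; split; first exact: val_inj.
split.
  by move=> a b p; rewrite (rm_walk gG) rm_dlength.
move=> u v q uw vw Hq.
have [q' [A1 W1 _ L1]] := reroute gG to oo uo k3 (leqnn (size q)) uw vw Hq.
have [p [Ep Hp]] := @rm_lift _ gG w (o1 gG to oo uo k3 Hu) (Sub u uw) (Sub v vw) q' A1 W1.
exists (Sub u uw), (Sub v vw), p; split => //.
by rewrite rm_dlength Ep.
Qed.

Lemma key n : forall G, #|pV G| <= n -> good G -> forall x y q r,
  is_walk G x y q -> is_walk G y x r ->
  exists p, is_walk G x y p /\ 3 * size p <= dlength G q + dlength G r.
Proof.
elim: n => [|n IH] G VG gG x y q r Hq Hr.
  have H0 : 0 < #|pV G| by apply/card_gt0P; exists x.
  by rewrite leqNgt H0 in VG.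
case: (x =P y) => [<-|/eqP xy]; first by exists [::]; rewrite /= eqxx.
have sub : forall G' (w : pV G), good G' -> #|pV G'| < #|pV G| ->
    forall (fv : pV G' -> pV G) (fd : pD G' -> pD G), injective fv ->
     (forall a b p, is_walk G' a b p -> is_walk G (fv a) (fv b) (map fd p) /\
                    dlength G (map fd p) = dlength G' p) ->
     (forall u v q, u != w -> v != w -> is_walk G u v q ->
        exists a b p, [/\ fv a = u, fv b = v, is_walk G' a b p & dlength G' p <= dlength G q]) ->
    forall x y q r, x != w -> y != w -> is_walk G x y q -> is_walk G y x r ->
    exists p, is_walk G x y p /\ 3 * size p <= dlength G q + dlength G r.
  move=> G' w gG' VG' fv fd fi P1 P2 x' y' q' r' xw yw Hq' Hr'.
  have [a [b [q2 [Ea Eb W2 L2]]]] := P2 _ _ _ xw yw Hq'.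
  have [b' [a' [r2 [Eb' Ea' W3 L3]]]] := P2 _ _ _ yw xw Hr'.
  have ea : a' = a by apply: fi; rewrite Ea Ea'.
  have eb : b' = b by apply: fi; rewrite Eb Eb'.
  rewrite ea eb in W3.
  have Vn : #|pV G'| <= n by lia.
  have [p' [Wp Lp]] := IH G' Vn gG' a b q2 r2 W2 W3.
  have [Wm Dm] := P1 _ _ _ Wp.
  exists (map fd p'); rewrite -Ea -Eb Wm size_map; split => //; lia.
case: (cand_or_leaf gG xy) => [/existsP [w /andP [/andP [cw wx] wy]]|[d1 c1]].
  have [G' [gG' [VG' [fv [fd [fi [P1 P2]]]]]]] := removal gG cw wx wy xy.
  have xw : x != w by rewrite eq_sym.
  have yw : y != w by rewrite eq_sym.
  exact: (sub G' w gG' VG' fv fd fi P1 P2 x y q r xw yw).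
case: q Hq => [|d q1] Hq; first by move: Hq => /= /eqP E; rewrite E eqxx in xy.
case/andP: Hq => /eqP td Hq1.
case/lastP: r Hr => [|r1 l] Hr; first by move: Hr => /= /eqP E; rewrite E eqxx in xy.
move: Hr; rewrite -cats1 => /is_walk_catP [m [Hr1 /= /andP [/eqP tl /eqP hl]]].
have El : palpha G l = d.
  apply: (card1_eq (A := fun d => ptail G d == x)) d1 _ _; first by rewrite tail_alpha hl.
  by rewrite td.
have Hm : m = phead G d by rewrite -tl -El (head_alpha gG).
rewrite Hm in Hr1.
have cq : dlength G (d :: q1) = cost d + dlength G q1 by [].
have cr : dlength G (r1 ++ [:: l]) = dlength G r1 + cost l.
  by rewrite dlength_cat /dlength /= addn0.
have El' : l = palpha G d by rewrite -El (g_aa gG).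
have c3 : cost l + cost d = 3 by rewrite El' (cost_alpha gG).
case: (phead G d =P y) => [hy|/eqP hy].
  exists [:: d]; rewrite /= td hy !eqxx; split => //; lia.
have cx : cand x by rewrite /cand c1 d1.
have xh : x != phead G d by rewrite -td; apply: (g_noloop gG).
have [G' [gG' [VG' [fv [fd [fi [P1 P2]]]]]]] := removal gG cx xh xy hy.
have hx : phead G d != x by rewrite eq_sym.
have yx : y != x by rewrite eq_sym.
have [p' [Wp Lp]] := sub G' x gG' VG' fv fd fi P1 P2 _ _ _ _ hx yx Hq1 Hr1.
exists (d :: p'); rewrite /= td eqxx Wp; split => //; lia.
Qed.

Unset Implicit Arguments.

Theorem proposition9p7 (G : plane_digraph) (u v : pV G) (p : seq (pD G)) :
  is_CAT0_planar G -> comb_geodesic G u v p -> is_delta G u v (dlength G p).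
Proof.
move=> HC [Hp Hmin]; have gG := cat0_good HC.
split; first by exists p.
move=> q Hq.
have Hr := rwalk_walk gG Hp.
have [p' [Wp' Lp']] := key (leqnn _) gG Hq Hr.
have := Hmin _ Wp'; have := rwalk_cost gG p; lia.
Qed.
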